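(* Let $\pi>0$, let $0<\theta_1<\dots<\theta_K$ and $0\le\beta_1<\dots<\beta_M\le1$, and let $A:[0,D]\to[0,\infty)$ be differentiable with $A'(Q)<0$ on $[0,D]$. For $Q\in[0,D]$ define $\sigma(Q,\beta,\theta)=-[\theta\beta+\pi(1-\beta)]A'(Q)$. Let $\Lambda_1$ denote a user type $(\beta_m,\theta_k)$ with the smallest value of $\sigma(Q,\cdot)$ and $\Lambda_{KM}$ a user type with the largest value of $\sigma(Q,\cdot)$ among the $KM$ types. Then: (i) if $\theta_1<\theta_K<\pi$, one may take $\Lambda_1=(\beta_M,\theta_1)$ and $\Lambda_{KM}=(\beta_1,\theta_K)$; (ii) if $\theta_1<\pi<\theta_K$, one may take $\Lambda_1=(\beta_M,\theta_1)$ and $\Lambda_{KM}=(\beta_M,\theta_K)$; (iii) if $\pi<\theta_1<\theta_K$, one may take $\Lambda_1=(\beta_1,\theta_1)$ and $\Lambda_{KM}=(\beta_M,\theta_K)$. (That is, in each case the stated type minimizes, resp. maximizes, $\sigma(Q,\cdot)$ over all $KM$ types, for every $Q$.)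
   Context: Model: $\pi$ is the overage price per unit of data beyond the cap; $A(Q)$ is a subscriber's expected overage consumption under data cap $Q$ (decreasing and convex). A user type $(\beta,\theta)$ consists of a data valuation $\theta$ and a network substitutability $\beta$; $\sigma$ is the user's willingness-to-pay (slope of his indifference curve in the cap/fee plane). Types are sorted as $\Lambda_1,\dots,\Lambda_{KM}$ in ascending order of $\sigma$; this ordering does not depend on $Q$. *)

(* Defs.v *)
From Stdlib Require Import Reals.
Open Scope R_scope.

(* Willingness-to-pay of a user of type (beta, theta) at data cap Q, where
   dA is the derivative A' of the expected overage consumption A. *)
Definition sigma (pi : R) (dA : R -> R) (Q beta theta : R) : R :=
  - (theta * beta + pi * (1 - beta)) * dA Q.

Definition is_min_type (pi : R) (dA : R -> R) (K M : nat)
  (beta theta : nat -> R) (Q b t : R) : Prop :=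
  forall k m, (1 <= k <= K)%nat -> (1 <= m <= M)%nat ->
    sigma pi dA Q b t <= sigma pi dA Q (beta m) (theta k).

Definition is_max_type (pi : R) (dA : R -> R) (K M : nat)
  (beta theta : nat -> R) (Q b t : R) : Prop :=
  forall k m, (1 <= k <= K)%nat -> (1 <= m <= M)%nat ->
    sigma pi dA Q (beta m) (theta k) <= sigma pi dA Q b t.

(* Main.v *)
Require Import Defs.
From Stdlib Require Import Reals Lra Lia Psatz.
Open Scope R_scope.

Theorem proposition2
  (pi D : R) (K M : nat) (theta beta : nat -> R) (A dA : R -> R)
  (Hpi : 0 < pi)
  (HK : (1 <= K)%nat) (HM : (1 <= M)%nat)
  (Htheta0 : 0 < theta 1%nat)
  (Htheta : forall i j, (1 <= i)%nat -> (i < j)%nat -> (j <= K)%nat -> theta i < theta j)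
  (Hbeta0 : 0 <= beta 1%nat) (Hbeta1 : beta M <= 1)
  (Hbeta : forall i j, (1 <= i)%nat -> (i < j)%nat -> (j <= M)%nat -> beta i < beta j)
  (HA0 : forall Q, 0 <= Q <= D -> 0 <= A Q)
  (HdA : forall Q, 0 <= Q <= D -> derivable_pt_lim A Q (dA Q))
  (HdAneg : forall Q, 0 <= Q <= D -> dA Q < 0) :
  (theta 1%nat < theta K < pi ->
     forall Q, 0 <= Q <= D ->
       is_min_type pi dA K M beta theta Q (beta M) (theta 1%nat) /\
       is_max_type pi dA K M beta theta Q (beta 1%nat) (theta K)) /\
  (theta 1%nat < pi < theta K ->
     forall Q, 0 <= Q <= D ->
       is_min_type pi dA K M beta theta Q (beta M) (theta 1%nat) /\
       is_max_type pi dA K M beta theta Q (beta M) (theta K)) /\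
  (pi < theta 1%nat < theta K ->
     forall Q, 0 <= Q <= D ->
       is_min_type pi dA K M beta theta Q (beta 1%nat) (theta 1%nat) /\
       is_max_type pi dA K M beta theta Q (beta M) (theta K)).
Proof.
  assert (Hb : forall m, (1 <= m <= M)%nat -> beta 1%nat <= beta m <= beta M).
  { intros m [H1 H2]. split.
    - destruct (Nat.eq_dec m 1) as [->|Hn]; [lra|]. left; apply Hbeta; lia.
    - destruct (Nat.eq_dec m M) as [->|Hn]; [lra|]. left; apply Hbeta; lia. }
  assert (Ht : forall k, (1 <= k <= K)%nat -> theta 1%nat <= theta k <= theta K).
  { intros k [H1 H2]. split.
    - destruct (Nat.eq_dec k 1) as [->|Hn]; [lra|]. left; apply Htheta; lia.
    - destruct (Nat.eq_dec k K) as [->|Hn]; [lra|]. left; apply Htheta; lia. }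
  assert (Hs : forall Q b t b' t' : R, 0 <= Q <= D ->
     b * t + pi * (1 - b) <= b' * t' + pi * (1 - b') ->
     Defs.sigma pi dA Q b t <= Defs.sigma pi dA Q b' t').
  { intros Q b t b' t' HQ H. unfold Defs.sigma. specialize (HdAneg Q HQ).
    replace (- (t * b + pi * (1 - b)) * dA Q) with ((b * t + pi * (1 - b)) * (- dA Q)) by ring.
    replace (- (t' * b' + pi * (1 - b')) * dA Q) with ((b' * t' + pi * (1 - b')) * (- dA Q)) by ring.
    apply Rmult_le_compat_r; lra. }
  split; [|split]; intros Hc Q HQ; split; intros k m Hk Hm; apply Hs; auto;
    pose proof (Hb m Hm); pose proof (Ht k Hk);
    assert (0 <= beta m) by lra;
    nra.
Qed.
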